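(* Let $\Lambda$ be a well-founded semilattice. Then every nonprincipal strongly productive ultrafilter on $\Lambda$ is regular.
   Context: A semilattice is a commutative semigroup in which every element is idempotent, ordered by $x\le y$ iff $xy=x$; it is well-founded if every nonempty subset has a minimal element. For a sequence $\vec{x}=(x_n)_{n\in\omega}$, $\mathrm{FP}(\vec{x})$ is the set of all products $\prod_{i\in a}x_i$ with $a$ a finite nonempty subset of $\omega$, and $\mathrm{FP}_1(\vec{x})=\mathrm{FP}((x_{n+1})_n)$. An ultrafilter $q$ is strongly productive if every $A\in q$ contains some $\mathrm{FP}(\vec{x})\in q$. A nonprincipal strongly productive ultrafilter $q$ is regular if there is $B\in q$ such that for every sequence $\vec{x}$ with $\mathrm{FP}(\vec{x})\subseteq B$, the set $x_0\mathrm{FP}_1(\vec{x})$ does not belong to $q$. *)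

(* Defs.v *)
From Stdlib Require Import List Arith Sorting.Sorted.
Import ListNotations.
Set Implicit Arguments.

Record semilattice (T : Type) (op : T -> T -> T) : Prop := {
  sl_assoc : forall x y z, op x (op y z) = op (op x y) z;
  sl_comm  : forall x y, op x y = op y x;
  sl_idem  : forall x, op x x = x
}.

Definition sl_le (T : Type) (op : T -> T -> T) (x y : T) : Prop := op x y = x.

Definition sl_well_founded (T : Type) (op : T -> T -> T) : Prop :=
  forall S : T -> Prop, (exists x, S x) ->
    exists m, S m /\ forall y, S y -> sl_le op y m -> y = m.

Definition prod_list (T : Type) (op : T -> T -> T) (x : nat -> T) (i0 : nat) (a : list nat) : T :=
  fold_left (fun acc j => op acc (x j)) a (x i0).

(* FP(x) = products over finite nonempty subsets of omega; a finite nonempty subset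
   is represented by the strictly increasing list of its elements. *)
Definition FP (T : Type) (op : T -> T -> T) (x : nat -> T) : T -> Prop :=
  fun y => exists (i0 : nat) (a : list nat),
    StronglySorted lt (i0 :: a) /\ y = prod_list op x i0 a.

Definition FP1 (T : Type) (op : T -> T -> T) (x : nat -> T) : T -> Prop :=
  FP op (fun n => x (S n)).

Definition ultrafilter (T : Type) (q : (T -> Prop) -> Prop) : Prop :=
  q (fun _ => True) /\
  ~ q (fun _ => False) /\
  (forall A B : T -> Prop, q A -> (forall t, A t -> B t) -> q B) /\
  (forall A B : T -> Prop, q A -> q B -> q (fun t => A t /\ B t)) /\
  (forall A : T -> Prop, q A \/ q (fun t => ~ A t)).

Definition principal (T : Type) (q : (T -> Prop) -> Prop) : Prop :=
  exists x : T, forall A : T -> Prop, q A <-> A x.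

Definition strongly_productive (T : Type) (op : T -> T -> T) (q : (T -> Prop) -> Prop) : Prop :=
  forall A : T -> Prop, q A ->
    exists x : nat -> T, (forall t, FP op x t -> A t) /\ q (FP op x).

Definition regular (T : Type) (op : T -> T -> T) (q : (T -> Prop) -> Prop) : Prop :=
  ~ principal q /\ strongly_productive op q /\
  exists B : T -> Prop, q B /\
    forall x : nat -> T, (forall t, FP op x t -> B t) ->
      ~ q (fun t => exists y, FP1 op x y /\ t = op (x 0) y).

(* Main.v *)
Require Import Defs.
From Stdlib Require Import List Arith Sorting.Sorted Classical.
Import ListNotations.

Theorem mainTheorem13 (T : Type) (op : T -> T -> T) :
  semilattice op -> sl_well_founded op ->
  forall q : (T -> Prop) -> Prop,
    ultrafilter q -> ~ principal q -> strongly_productive op q ->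
    regular op q.
Proof.
  intros [Ha Hc Hi] Hwf q [HT [HF [Hup [Hint Hult]]]] Hnp Hsp.
  split; [exact Hnp|]. split; [exact Hsp|].
  assert (Hfp0 : forall x : nat -> T, FP op x (x 0)).
  { intro x. exists 0, []. split; [constructor; constructor|reflexivity]. }
  assert (Hdown : forall x : nat -> T,
      q (fun t => exists y, FP1 op x y /\ t = op (x 0) y) ->
      q (fun t => sl_le op t (x 0))).
  { intros x Hq. apply (Hup _ _ Hq). intros t [y [_ ->]]. unfold sl_le.
    rewrite <- Ha, (Hc y (x 0)), Ha, Hi. reflexivity. }
  destruct (classic (exists t, q (fun s => sl_le op s t))) as [Hex|Hno].
  - destruct (Hwf _ Hex) as [m [Hm Hmin]].
    exists (fun t => sl_le op t m /\ t <> m). split.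
    + destruct (Hult (fun t => t = m)) as [Hs|Hs].
      * exfalso; apply Hnp. exists m. intro A. split.
        -- intro HA. destruct (classic (A m)) as [h|h]; [exact h|].
           exfalso. apply HF. apply (Hup _ _ (Hint _ _ HA Hs)).
           intros t [H1 H2]. subst. contradiction.
        -- intro HA. apply (Hup _ _ Hs). intros t ->. exact HA.
      * apply (Hint _ _ Hm Hs).
    + intros x HB Hq. destruct (HB _ (Hfp0 x)) as [Hle Hne].
      apply Hne. apply Hmin; [exact (Hdown x Hq)|exact Hle].
  - exists (fun _ => True). split; [exact HT|].
    intros x _ Hq. apply Hno. exists (x 0). exact (Hdown x Hq).
Qed.
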